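(* In the standing setup, let $n\ge1$, let $I$ be a nonempty subset of $\{1,\dots,n\}$, and set $\delta:=\max\{|t_i-t_j|:i,j\in I\}$. Then $$\Big\|\frac1n\sum_{k=1}^n x_k\Big\|\ge\frac{\#I}{n}\,\rho_\infty\exp(-\delta^2/2)>0.$$
   Context: Standing setup. $X$ is a real Hilbert space. $u\colon[0,\infty)\to X$ satisfies $\langle u(s),u(t)\rangle=\exp(-(s-t)^2)$ for all $s,t\ge0$. $(d_n)_{n\ge1}$ satisfies: $d_n>0$, $\sum_k d_k^2<\infty$, $t_n:=\sum_{k=1}^{n-1}d_k\to+\infty$, $d_1\le1/8$, $d_{n+1}\le d_n/(1+64d_n^2)$ for all $n$. $\rho_1:=1$, $\rho_{n+1}:=\rho_n\exp(-d_n^2)$, $\rho_\infty:=\exp(-\sum_k d_k^2)$, $x_n:=\rho_nu(t_n)$. $\#I$ is the cardinality of $I$. *)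

(* Defs.v *)
From HB Require Import structures.
From mathcomp Require Import all_boot all_order all_algebra.
From mathcomp Require Import all_classical all_reals all_analysis.
Set Implicit Arguments. Unset Strict Implicit. Unset Printing Implicit Defensive.
Import Order.TTheory GRing.Theory Num.Theory.
Local Open Scope ring_scope.

Definition is_inner_product (R : realType) (V : lmodType R) (ip : V -> V -> R) :=
  [/\ (forall (a : R) (x y z : V), ip (a *: x + y) z = a * ip x z + ip y z),
      (forall x y : V, ip x y = ip y x),
      (forall x : V, 0 <= ip x x) &
      (forall x : V, ip x x = 0 -> x = 0)].

Definition ipnorm (R : realType) (V : lmodType R) (ip : V -> V -> R) (v : V) : R :=
  Num.sqrt (ip v v).

Definition tt (R : realType) (d : nat -> R) (n : nat) : R :=
  \sum_(1 <= k < n) d k.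

Definition rho (R : realType) (d : nat -> R) (n : nat) : R :=
  \prod_(1 <= k < n) expR (- (d k ^+ 2)).

Definition rho_inf (R : realType) (d : nat -> R) : R :=
  expR (- \big[+%R/0%R]_(1 <= k <oo) (d k ^+ 2)).

Definition xx (R : realType) (V : lmodType R) (u : R -> V) (d : nat -> R) (n : nat) : V :=
  rho d n *: u (tt d n).

(* completeness of V for the norm induced by ip (so (V, ip) is a real Hilbert space) *)
Definition ip_complete (R : realType) (V : lmodType R) (ip : V -> V -> R) :=
  forall f : nat -> V,
    (forall e : R, 0 < e -> exists N : nat, forall m k : nat, (N <= m)%N -> (N <= k)%N ->
        ipnorm ip (f m - f k) < e) ->
    exists v : V, forall e : R, 0 < e -> exists N : nat, forall m : nat, (N <= m)%N ->
        ipnorm ip (f m - v) < e.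

(* Main.v *)
Require Import Defs.
From HB Require Import structures.
From mathcomp Require Import all_boot all_order all_algebra.
From mathcomp Require Import all_classical all_reals all_analysis.
From mathcomp Require Import ring lra.
Import Order.TTheory GRing.Theory Num.Theory.
Local Open Scope classical_set_scope.
Local Open Scope ring_scope.

Lemma rho_ge (R : realType) (d : nat -> R)
  (Hdsq : cvgn [sequence \sum_(1 <= k < n) (d k ^+ 2)]_n) k :
  rho_inf d <= rho d k.
Proof.
rewrite /rho_inf /rho -expR_sum sumrN ler_expR lerN2.
have := nondecreasing_cvgn_le _ Hdsq k.
apply.
move=> a b ab /=.
case: (leqP a 1) => ha.
  rewrite [X in X <= _]big_geq //; apply: sumr_ge0 => i _; exact: sqr_ge0.
rewrite [X in _ <= X](big_cat_nat _ (n:=a)) //=; last by rewrite ltnW.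
by rewrite lerDl; apply: sumr_ge0 => i _; exact: sqr_ge0.
Qed.

Lemma tt_ge0 (R : realType) (d : nat -> R)
  (Hdpos : forall n : nat, (1 <= n)%N -> 0 < d n) k : 0 <= tt d k.
Proof.
rewrite /tt big_nat_cond; apply: sumr_ge0 => i /andP[/andP[h _] _].
exact: ltW (Hdpos _ h).
Qed.

Lemma rho_gt0 (R : realType) (d : nat -> R) k : 0 < rho d k.
Proof. by rewrite /rho; apply: prodr_gt0 => i _; exact: expR_gt0. Qed.

Theorem lemma6p5 (R : realType) (V : lmodType R) (ip : V -> V -> R)
  (u : R -> V) (d : nat -> R)
  (Hip : is_inner_product ip) (Hcomplete : ip_complete ip)
  (Hu : forall s t : R, 0 <= s -> 0 <= t -> ip (u s) (u t) = expR (- ((s - t) ^+ 2)))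
  (Hdpos : forall n : nat, (1 <= n)%N -> 0 < d n)
  (Hdsq : cvgn [sequence \sum_(1 <= k < n) (d k ^+ 2)]_n)
  (Ht : tt d @ \oo --> +oo)
  (Hd1 : d 1%N <= 1 / 8)
  (Hdrec : forall n : nat, (1 <= n)%N -> d n.+1 <= d n / (1 + 64 * d n ^+ 2))
  (n : nat) (Hn : (1 <= n)%N) (I : {set 'I_n}) (HI : I != finset.set0) :
  let delta := \big[Num.max/0]_(i in I) \big[Num.max/0]_(j in I)
                 `|tt d i.+1 - tt d j.+1| in
  #|I|%:R / n%:R * rho_inf d * expR (- (delta ^+ 2) / 2)
    <= ipnorm ip (n%:R^-1 *: \sum_(k < n) xx u d k.+1)
  /\ 0 < #|I|%:R / n%:R * rho_inf d * expR (- (delta ^+ 2) / 2).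
Proof.
move=> delta.
case: Hip => Hlin Hsym Hpos Hdef.
have lin1 : forall x y z, ip (x + y) z = ip x z + ip y z.
  by move=> x y z; have := Hlin 1 x y z; rewrite scale1r mul1r.
have ip0 : forall z, ip 0 z = 0.
  move=> z; have := lin1 0 0 z; rewrite addr0 => /eqP.
  by rewrite -subr_eq0 opprD addrA subrr sub0r oppr_eq0 => /eqP.
have scal : forall a x z, ip (a *: x) z = a * ip x z.
  by move=> a x z; have := Hlin a x 0 z; rewrite addr0 ip0 addr0.
have sumL : forall (f : 'I_n -> V) z, ip (\sum_(k < n) f k) z = \sum_(k < n) ip (f k) z.
  by move=> f z; rewrite (big_morph (fun v => ip v z) (fun x y => lin1 x y z) (ip0 z)).
have sumR : forall (f : 'I_n -> V) z, ip z (\sum_(k < n) f k) = \sum_(k < n) ip z (f k).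
  move=> f z; rewrite Hsym sumL; apply: eq_bigr => i _; exact: Hsym.
have rinf0 : 0 < rho_inf d by rewrite /rho_inf expR_gt0.
have cardI : (0 < #|I|)%N by rewrite card_gt0.
have n0 : (0 : R) < n%:R by rewrite ltr0n.
set e := expR (- (delta ^+ 2) / 2).
have e0 : 0 < e by rewrite expR_gt0.
set A := #|I|%:R * rho_inf d * e.
have A0 : 0 < A by rewrite !mulr_gt0 // ltr0n.
have eqA : #|I|%:R / n%:R * rho_inf d * e = n%:R^-1 * A by rewrite /A; field; rewrite gt_eqF.
rewrite eqA; split; last by rewrite mulr_gt0 // invr_gt0.
set S := \sum_(k < n) xx u d k.+1.
have SS : ip S S = \sum_(k < n) \sum_(l < n)
    (rho d k.+1 * rho d l.+1 * expR (- ((tt d k.+1 - tt d l.+1) ^+ 2))).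
  rewrite /S sumL; apply: eq_bigr => k _; rewrite sumR; apply: eq_bigr => l _.
  rewrite /xx scal Hsym scal Hsym Hu ?tt_ge0 //; ring.
have cpos : forall k l : 'I_n,
    0 <= rho d k.+1 * rho d l.+1 * expR (- ((tt d k.+1 - tt d l.+1) ^+ 2)).
  by move=> k l; rewrite !mulr_ge0 // ?expR_ge0 // ltW // rho_gt0.
have cge : forall k l : 'I_n, k \in I -> l \in I ->
    rho_inf d * rho_inf d * (e * e) <=
    rho d k.+1 * rho d l.+1 * expR (- ((tt d k.+1 - tt d l.+1) ^+ 2)).
  move=> k l kI lI.
  rewrite -!mulrA; apply: ler_pM.
  - exact: ltW.
  - by rewrite mulr_ge0 // ?ltW // mulr_gt0.
  - exact: rho_ge.
  apply: ler_pM; rewrite ?(ltW rinf0) ?rho_ge //; first by rewrite ltW // mulr_gt0.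
  rewrite /e -expRD ler_expR.
  have hd : `|tt d k.+1 - tt d l.+1| <= delta.
    apply: le_trans (le_bigmax_cond _ _ kI).
    exact: (le_bigmax_cond _ (fun j : 'I_n => `|tt d k.+1 - tt d j.+1|) lI).
  have : (tt d k.+1 - tt d l.+1) ^+ 2 <= delta ^+ 2.
    rewrite -[X in X <= _](real_normK (num_real (tt d k.+1 - tt d l.+1))).
    by rewrite ler_sqr ?nnegrE ?normr_ge0 // (le_trans _ hd).
  lra.
have SSge : A ^+ 2 <= ip S S.
  rewrite SS (bigID (mem I)) /= -[X in X <= _]addr0; apply: lerD; last first.
    by apply: sumr_ge0 => k _; apply: sumr_ge0.
  apply: (@le_trans _ _ (\sum_(k < n | k \in I) \sum_(l < n | l \in I)
        (rho d k.+1 * rho d l.+1 * expR (- ((tt d k.+1 - tt d l.+1) ^+ 2))))).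
    apply: (@le_trans _ _ (\sum_(k < n | k \in I) \sum_(l < n | l \in I)
        (rho_inf d * rho_inf d * (e * e)))); last first.
      by apply: ler_sum => k kI; apply: ler_sum => l lI; exact: cge.
    rewrite !sumr_const -mulrnA -mulr_natr natrM /A /e; rewrite le_eqVlt; apply/orP; left; apply/eqP.
    move: (rho_inf d) (expR (- (delta ^+ 2) / 2)) (#|I|%:R : R) => a b c; ring.
  apply: ler_sum => k _; rewrite [X in _ <= X](bigID (mem I)) /= lerDl.
  by apply: sumr_ge0.
rewrite /ipnorm scal Hsym scal mulrA -expr2 sqrtrM ?sqr_ge0 // sqrtr_sqr.
rewrite ger0_norm ?invr_ge0 ?ler0n // ler_pM2l ?invr_gt0 //.
by rewrite -(ger0_norm (ltW A0)) -sqrtr_sqr ler_sqrt.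
Qed.
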